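(* Let $\{C_\lambda\}$ be a combined rating rule satisfying (A1), (A2) and (A3). Then for every $n\ge1$, every $\lambda\in(0,\infty)^n$, every $R\in\mathbb{R}^n$ and every $\alpha>0$, $C_{\alpha\lambda}(R)=C_\lambda(R)$.
   Context: A combined rating rule assigns to every $n\ge1$ and every positive weight vector $\lambda=(\lambda_1,\dots,\lambda_n)\in(0,\infty)^n$ a function $C_\lambda:\mathbb{R}^n\to\mathbb{R}$. Write $\bar\lambda_B=\sum_{i\in B}\lambda_i$, $R_B=(R_i)_{i\in B}$, $\lambda_B=(\lambda_i)_{i\in B}$ for nonempty $B\subseteq\{1,\dots,n\}$ (inherited increasing order); $\mathbf 1$ is the all-ones vector. (A1) Same-scale normalization: $C_\lambda(r\mathbf 1)=r$ for all $\lambda$ and all $r\in\mathbb{R}$. (A2) Regularity and monotonicity: for each $n$, $(\lambda,R)\mapsto C_\lambda(R)$ is continuous on $(0,\infty)^n\times\mathbb{R}^n$; for each fixed $\lambda$, $C_\lambda$ is continuously differentiable with $\partial_i C_\lambda(R)>0$ for all $i$ and all $R$. (A3) Recursive consistency: for every ordered partition $(B_1,\dots,B_m)$ of $\{1,\dots,n\}$ into nonempty blocks, $C_\lambda(R)=C_{(\bar\lambda_{B_1},\dots,\bar\lambda_{B_m})}\big(C_{\lambda_{B_1}}(R_{B_1}),\dots,C_{\lambda_{B_m}}(R_{B_m})\big)$. *)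

(* Defs.v *)
From HB Require Import structures.
From mathcomp Require Import all_boot all_order all_algebra.
From mathcomp Require Import all_classical all_reals all_analysis.
Set Implicit Arguments. Unset Strict Implicit. Unset Printing Implicit Defensive.
Import Order.TTheory GRing.Theory Num.Theory.
Import numFieldNormedType.Exports.
Local Open Scope ring_scope.

Section Defs.
Variable R : realType.

(* A combined rating rule: for each n and weight vector lam, a function
   C n lam : R^n -> R.  Values of C at non-positive weights are irrelevant. *)
Definition rating_rule := forall n : nat, 'rV[R]_n -> 'rV[R]_n -> R.

Definition posvec n (lam : 'rV[R]_n) : Prop := forall i, 0 < lam 0 i.

Definition constvec n (r : R) : 'rV[R]_n := const_mx r.

(* sub-vector x_B, with the inherited increasing order of B *)
Definition subvec n (B : {set 'I_n}) (x : 'rV[R]_n) : 'rV[R]_#|B| :=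
  \row_(j < #|B|) x 0 (enum_val j).

Definition block n m (f : 'I_n -> 'I_m) (k : 'I_m) : {set 'I_n} :=
  [set i | f i == k].

Definition A1 (C : rating_rule) : Prop :=
  forall n (lam : 'rV[R]_n) (r : R), (0 < n)%N -> posvec lam ->
    C n lam (constvec n r) = r.

Definition A2 (C : rating_rule) : Prop :=
  forall n, (0 < n)%N ->
  (forall (lam x : 'rV[R]_n), posvec lam ->
     {for (lam, x), continuous (fun p : 'rV[R]_n * 'rV[R]_n => C n p.1 p.2)}) /\
  (forall lam : 'rV[R]_n, posvec lam ->
     (forall x, differentiable (C n lam) x) /\
     (forall i : 'I_n, continuous (fun x => 'D_(delta_mx 0 i) (C n lam) x)) /\
     (forall (i : 'I_n) x, 0 < 'D_(delta_mx 0 i) (C n lam) x)).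

(* (A3): an ordered partition (B_1,...,B_m) of {1..n} into nonempty blocks
   is encoded by a surjection f : 'I_n -> 'I_m, B_k = f^{-1}(k). *)
Definition A3 (C : rating_rule) : Prop :=
  forall n m (f : 'I_n -> 'I_m), (0 < n)%N -> (forall k, exists i, f i = k) ->
  forall (lam x : 'rV[R]_n), posvec lam ->
    C n lam x =
    C m (\row_k \sum_(i in block f k) lam 0 i)
        (\row_k C #|block f k| (subvec (block f k) lam) (subvec (block f k) x)).

End Defs.

(* Main.v *)
Require Import Defs.
From HB Require Import structures.
From mathcomp Require Import all_boot all_order all_algebra.
From mathcomp Require Import all_classical all_reals all_analysis.
From mathcomp Require Import zify.
Import Order.TTheory GRing.Theory Num.Theory.
Import numFieldNormedType.Exports.
Local Open Scope ring_scope.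
Lemma enum_block_val (N : nat) (B : {set 'I_N}) (P : pred nat) (s : seq nat) :
  (forall i, (i \in B) = P (val i)) -> seq.filter P (iota 0 N) = s ->
  #|B| = size s /\ forall j : 'I_#|B|, val (enum_val j) = nth 0%N s j.
Proof.
move=> hB hs.
have hm : map val (enum B) = s.
  rewrite -hs -val_enum_ord filter_map [in RHS]enumT /enum_mem.
  congr map; apply: seq.eq_filter => i /=.
  by rewrite hB.
split; first by rewrite cardE -hm size_map.
move=> j; rewrite (enum_val_nth (enum_val j)) -hm (nth_map (enum_val j)) //.
by rewrite -cardE.
Qed.

Lemma C_cast (R : realType) (C : rating_rule R) m p (e : m = p)
  (u v : 'rV[R]_m) (u' v' : 'rV[R]_p) :
  (forall i, u' 0 i = u 0 (cast_ord (esym e) i)) ->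
  (forall i, v' 0 i = v 0 (cast_ord (esym e) i)) ->
  C m u v = C p u' v'.
Proof.
case: p / e u' v' => u' v' hu hv.
have -> : u' = u by apply/matrixP => i j; rewrite ord1 hu cast_ord_id.
have -> : v' = v by apply/matrixP => i j; rewrite ord1 hv cast_ord_id.
by [].
Qed.

Lemma posvec_blocks (R : realType) n m (f : 'I_n -> 'I_m) (lam : 'rV[R]_n) :
  (forall k, exists i, f i = k) -> posvec lam ->
  posvec (\row_k \sum_(i in block f k) lam 0 i).
Proof.
move=> hf hl k; rewrite mxE; have [i hi] := hf k.
rewrite (bigD1 i) /=; last by rewrite /block inE hi.
apply: ltr_pwDl; first exact: hl.
by apply: sumr_ge0 => j _; apply/ltW/hl.
Qed.

Lemma filter_half n (b : bool) :
  seq.filter (fun k => (k < n)%N == b) (iota 0 (n + n)) =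
  if b then iota 0 n else iota n n.
Proof.
rewrite iotaD filter_cat add0n.
have h1 : seq.filter (fun k => (k < n)%N == b) (iota 0 n) = if b then iota 0 n else [::].
  case: b => /=.
    by apply/all_filterP/allP => k; rewrite mem_iota add0n => /andP[_ ->].
  rewrite -(filter_pred0 (iota 0 n)); apply: eq_in_filter => k.
  by rewrite mem_iota add0n => /andP[_ ->].
have h2 : seq.filter (fun k => (k < n)%N == b) (iota n n) = if b then [::] else iota n n.
  clear h1; case: b => /=.
    rewrite -(filter_pred0 (iota n n)); apply: eq_in_filter => k.
    by rewrite mem_iota => /andP[h _]; rewrite ltnNge h.
  by apply/all_filterP/allP => k; rewrite mem_iota => /andP[h _]; rewrite ltnNge h.
by rewrite h1 h2; case: b {h1 h2}; rewrite ?cats0.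
Qed.

Lemma half_C (R : realType) (C : rating_rule R) n (mu nu x : 'rV[R]_n)
  (B : {set 'I_(n + n)}) (b : bool) :
  (forall i, (i \in B) = ((val i < n)%N == b)) ->
  C #|B| (subvec B (row_mx mu nu)) (subvec B (row_mx x x)) =
  C n (if b then mu else nu) x.
Proof.
move=> hB.
have [hc hv] := @enum_block_val _ B (fun k => (k < n)%N == b) _ hB (filter_half n b).
have e : n = #|B| by rewrite hc; case: (b); rewrite size_iota.
have hE : forall j : 'I_#|B|, enum_val j =
   if b then lshift n (cast_ord (esym e) j) else rshift n (cast_ord (esym e) j).
  move=> j; have hj : (j < n)%N by have := ltn_ord j; move: (#|B|) e j => ? ->.
  case: b hv {hc hB} => hv; apply: val_inj; rewrite /= hv nth_iota //.
symmetry; apply: (@C_cast R C _ _ e) => i; rewrite mxE hE; case: b {hE hB hc hv};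
  by rewrite ?row_mxEl ?row_mxEr.
Qed.

Lemma add_lemma (R : realType) (C : rating_rule R) : A1 C -> A3 C ->
  forall n (mu nu x : 'rV[R]_n) c, (0 < n)%N -> posvec mu -> posvec nu ->
  C n mu x = c -> C n nu x = c -> C n (mu + nu) x = c.
Proof.
move=> hA1 hA3 n mu nu x c hn hmu hnu hc1 hc2.
pose w := row_mx mu nu; pose v := row_mx x x.
have hw : posvec w.
  move=> i; rewrite /w -(fintype.splitK i); case: (fintype.split i) => j /=.
    by rewrite row_mxEl.
  by rewrite row_mxEr.
have hnn : (0 < n + n)%N by rewrite addn_gt0 hn.
pose f1 := fun i : 'I_(n + n) => if (val i < n)%N then (ord0 : 'I_2) else ord_max.
have sf1 : forall k, exists i, f1 i = k.
  case=> [[|[|k]] hk] //.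
    exists (lshift n (Ordinal hn)); rewrite /f1 /= hn; exact: val_inj.
  exists (rshift n (Ordinal hn)); rewrite /f1 /= ltnNge leq_addr; exact: val_inj.
have E1 := hA3 _ _ f1 hnn sf1 w v hw.
have hrow : (\row_k C #|block f1 k| (subvec (block f1 k) w) (subvec (block f1 k) v))
    = constvec 2 c.
  apply/matrixP => i k; rewrite !mxE.
  case: k => [[|[|k]] hk] //.
    rewrite (@half_C R C n mu nu x _ true) //.
    by move=> j; rewrite /block inE /f1; case: ifP.
  rewrite (@half_C R C n mu nu x _ false) //.
  by move=> j; rewrite /block inE /f1; case: ifP.
rewrite hrow hA1 // in E1; last exact: posvec_blocks.
pose f2 := fun i : 'I_(n + n) => match fintype.split i with inl a => a | inr a => a end.
have hf2l : forall k, f2 (lshift n k) = k by move=> k; rewrite /f2 -/(unsplit (inl k)) fintype.unsplitK.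
have hf2r : forall k, f2 (rshift n k) = k by move=> k; rewrite /f2 -/(unsplit (inr k)) fintype.unsplitK.
have sf2 : forall k, exists i, f2 i = k by move=> k; exists (lshift n k).
have E2 := hA3 _ _ f2 hnn sf2 w v hw.
have hv : forall i, v 0 i = x 0 (f2 i).
  move=> i; rewrite /v -(fintype.splitK i); case: (fintype.split i) => j /=.
    by rewrite row_mxEl hf2l.
  by rewrite row_mxEr hf2r.
have hB : forall k, block f2 k = [set lshift n k; rshift n k].
  move=> k; apply/setP => i; rewrite /block !inE -(fintype.splitK i).
  case: (fintype.split i) => j /=; rewrite ?hf2l ?hf2r.
    have -> : (lshift n j == rshift n k) = false.
      by apply/negbTE/eqP => /(congr1 val) /=; have := ltn_ord j; lia.
    by rewrite (eqtype.inj_eq (@lshift_inj _ _)) orbF.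
  have -> : (rshift n j == lshift n k) = false.
    by apply/negbTE/eqP => /(congr1 val) /=; have := ltn_ord k; lia.
  by rewrite (eqtype.inj_eq (@rshift_inj _ _)).
have hrow2 : (\row_k C #|block f2 k| (subvec (block f2 k) w) (subvec (block f2 k) v)) = x.
  apply/matrixP => i k; rewrite ord1 !mxE.
  have -> : subvec (block f2 k) v = constvec _ (x 0 k).
    apply/matrixP => i' j; rewrite ord1 [LHS]mxE [RHS]mxE hv.
    by have := enum_valP j; rewrite /block inE => /eqP ->.
  apply: hA1; first by apply/card_gt0P; exists (lshift n k); rewrite /block inE hf2l.
  by move=> j; rewrite mxE.
have hsum : (\row_k \sum_(i in block f2 k) w 0 i) = mu + nu.
  apply/matrixP => i k; rewrite ord1 !mxE hB big_setU1 /= ?big_set1.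
    by rewrite /w row_mxEl row_mxEr.
  by rewrite inE; apply/eqP => /(congr1 val) /= h; have := ltn_ord k; lia.
by rewrite -E1 E2 hrow2 hsum.
Qed.

Lemma posvecZ (R : realType) n (lam : 'rV[R]_n) (a : R) :
  0 < a -> posvec lam -> posvec (a *: lam).
Proof. by move=> ha hl i; rewrite mxE mulr_gt0. Qed.

Lemma nat_scale (R : realType) (C : rating_rule R) : A1 C -> A3 C ->
  forall n (lam x : 'rV[R]_n) k, (0 < n)%N -> posvec lam ->
  C n (k.+1%:R *: lam) x = C n lam x.
Proof.
move=> h1 h3 n lam x k hn hl; elim: k => [|k IH]; first by rewrite scale1r.
have -> : k.+2%:R *: lam = k.+1%:R *: lam + lam.
  by rewrite -[k.+2]addn1 natrD scalerDl scale1r.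
apply: (@add_lemma R C h1 h3) => //; exact: posvecZ.
Qed.

Lemma rat_scale (R : realType) (C : rating_rule R) : A1 C -> A3 C ->
  forall n (lam x : 'rV[R]_n) p q, (0 < n)%N -> posvec lam ->
  C n ((p.+1%:R / q.+1%:R) *: lam) x = C n lam x.
Proof.
move=> h1 h3 n lam x p q hn hl.
pose lam' := q.+1%:R^-1 *: lam.
have hl' : posvec lam' by apply: posvecZ; rewrite // invr_gt0.
have e1 : (p.+1%:R / q.+1%:R) *: lam = p.+1%:R *: lam' by rewrite scalerA.
have e2 : lam = q.+1%:R *: lam' by rewrite scalerA mulfV ?scale1r.
by rewrite e1 (@nat_scale R C h1 h3) // [in RHS]e2 (@nat_scale R C h1 h3).
Qed.

Lemma int_pos (R : realType) (z : int) : 0 < z -> exists k : nat, (z%:~R : R) = k.+1%:R.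
Proof.
move=> hz; exists (`|z|%N.-1).
rewrite prednK; last by rewrite absz_gt0 gt_eqF.
by rewrite -[in LHS](gtz0_abs hz) pmulrn.
Qed.

Lemma pos_rat_scale (R : realType) (C : rating_rule R) : A1 C -> A3 C ->
  forall n (lam x : 'rV[R]_n) (r : rat), (0 < n)%N -> posvec lam -> 0 < r ->
  C n (ratr r *: lam) x = C n lam x.
Proof.
move=> h1 h3 n lam x r hn hl hr.
have hz : 0 < numq r by rewrite numq_gt0.
have [p hp] := @int_pos R (numq r) hz.
have [q hq] := @int_pos R (denq r) (denq_gt0 r).
by rewrite /ratr hp hq (@rat_scale R C h1 h3).
Qed.

Theorem lemma2 (R : realType) (C : rating_rule R) :
  A1 C -> A2 C -> A3 C ->
  forall (n : nat) (lam x : 'rV[R]_n) (alpha : R),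
    (0 < n)%N -> posvec lam -> 0 < alpha ->
    C n (alpha *: lam) x = C n lam x.
Proof.
move=> h1 h2 h3 n lam x a hn hl ha.
pose g := fun t : R => C n (t *: lam) x.
have hg : (g t @[t --> a] --> g a)%classic.
  have hc := (h2 n hn).1 (a *: lam) x (@posvecZ R n lam a ha hl).
  have hin : ((t *: lam, x) @[t --> a] --> (a *: lam, x))%classic.
    have hz : (t *: lam @[t --> a] --> a *: lam)%classic.
      by apply: cvgZr_tmp; exact: cvg_id.
    have hx : ((fun _ : R => x) @ a --> x)%classic by exact: cvg_cst.
    exact: (cvg_pair hz hx).
  exact: (cvg_comp _ _ hin hc).
case: (eqVneq (g a) (C n lam x)) => // hne.
have he : 0 < `|g a - C n lam x| by rewrite normr_gt0 subr_eq0.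
move/cvgrPdist_lt: hg => /(_ _ he) /nbhs_normP [d /= hd hball].
have hd' : 0 < Num.min d a by rewrite lt_min hd ha.
have hlt : a - Num.min d a < a by rewrite ltrBlDr ltrDl.
have [r hr] := @rat_in_itvoo R _ _ hlt.
move: hr; rewrite in_itv /= => /andP [hr1 hr2].
have hr0 : 0 < r.
  rewrite -(ltr_rat R) rmorph0 (le_lt_trans _ hr1) //.
  by rewrite subr_ge0 ge_min lexx orbT.
have := hball (ratr r); rewrite /ball_ /= => /(_ _) hb.
have : `|a - ratr r| < d.
  rewrite ger0_norm ?subr_ge0 ?ltW //.
  by move: hr1; rewrite ltrBlDr -ltrBlDl => /lt_le_trans; apply; rewrite ge_min lexx.
move/hb; rewrite /g (@pos_rat_scale R C h1 h3) //.
by rewrite ltxx.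
Qed.
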